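(* Let $G=(V,E)$ be a connected chordal graph of maximum degree $\Delta$ and let $U\subseteq V$ be a nonempty self-contained set. For $v\in U$, let $p_v$ be the fraction of ordered pairs $(a,b)\in U^2$ such that $v$ lies on some shortest path in $G$ between $a$ and $b$. Then $\max_{v\in U}p_v\ge \frac{1}{2(\Delta+1)}$.
   Context: $\delta$ is the shortest-path metric of the unweighted graph $G$. A graph is chordal if every cycle of length greater than three has a chord. A set $U\subseteq V$ is self-contained if for every $(x,y)\in U^2$, every shortest path in $G$ between $x$ and $y$ uses only vertices of $U$. A vertex lies on a path if it is one of its vertices (including endpoints). *)

(* Defs.v *)
From HB Require Import structures.
From mathcomp Require Import all_boot all_order all_algebra.
From Stdlib Require Import ClassicalDescription.
Set Implicit Arguments. Unset Strict Implicit. Unset Printing Implicit Defensive.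
Import Order.TTheory GRing.Theory Num.Theory.

Section Graphs.
Variable T : finType.
Variable e : rel T.

Definition simple_graph : Prop := symmetric e /\ irreflexive e.

Definition connected_graph : Prop := forall x y : T, connect e x y.

Definition degree (v : T) : nat := #|[set w | e v w]|.
Definition maxdeg : nat := \max_(v : T) degree v.

(* a walk a :: p from a to b *)
Definition walk (a b : T) (p : seq T) : bool := path e a p && (last a p == b).

Definition shortest_path (a b : T) (p : seq T) : Prop :=
  walk a b p /\ forall q, walk a b q -> size p <= size q.

Definition on_shortest_path (v a b : T) : Prop :=
  exists p, shortest_path a b p /\ v \in a :: p.

Definition has_chord (c : seq T) : bool :=
  [exists x : T, exists y : T,
     [&& x \in c, y \in c, e x y, y != next c x & y != prev c x]].
Definition chordal : Prop :=
  forall c : seq T, uniq c -> cycle e c -> 3 < size c -> has_chord c.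

Definition self_contained (U : {set T}) : Prop :=
  forall a b, a \in U -> b \in U ->
  forall p, shortest_path a b p -> {subset a :: p <= U}.

Definition pbool (P : Prop) : bool :=
  if excluded_middle_informative P then true else false.

Definition pairs_through (U : {set T}) (v : T) : {set T * T} :=
  [set ab | [&& ab.1 \in U, ab.2 \in U & pbool (on_shortest_path v ab.1 ab.2)]].

Definition frac_through (U : {set T}) (v : T) : rat :=
  (#|pairs_through U v|%:R / (#|U| ^ 2)%:R)%R.

End Graphs.

(* Main.v *)
Require Import Defs.
From HB Require Import structures.
From mathcomp Require Import all_boot all_order all_algebra.
From mathcomp Require Import zify.
From Stdlib Require Import ClassicalDescription.
Import Order.TTheory GRing.Theory Num.Theory.
Set Implicit Arguments. Unset Strict Implicit. Unset Printing Implicit Defensive.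

Section Chord.
Variables (T : finType) (e : rel T).

Lemma no_chordless (g : nat -> T) (m : nat) :
  chordal e -> 3 < m ->
  {in gtn m &, injective g} ->
  (forall i, i.+1 < m -> e (g i) (g i.+1)) ->
  e (g m.-1) (g 0) ->
  (forall i j, i < m -> j < m -> e (g i) (g j) ->
     j = i.+1 \/ i = j.+1 \/ (i = 0 /\ j = m.-1) \/ (j = 0 /\ i = m.-1)) ->
  False.
Proof.
move=> ch m3 ginj gnext gclose gonly.
set c := mkseq g m.
have uc : uniq c by apply/mkseq_uniqP.
have sc : size c = m by rewrite size_mkseq.
have ncg : forall i, i < m -> nth (g 0) c i = g i by move=> i im; rewrite nth_mkseq.
have cc : cycle e c.
  rewrite (cycle_path (g 0)) -nth_last sc ncg; last by lia.
  apply/(pathP (g 0)) => i; rewrite sc => im.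
  case: i im => [|i] im /=; first by rewrite ncg //; have := gnext 0; rewrite -(prednK (ltnW (ltnW (ltnW m3)))) /=; lia.
  rewrite !ncg //; last by lia. by apply: gnext.
have memc : forall x, x \in c -> exists2 i, i < m & x = g i.
  move=> x xc; exists (index x c); first by rewrite -sc index_mem.
  by rewrite -ncg ?nth_index // -sc index_mem.
have nextg : forall i, i < m -> next c (g i) = g (if i.+1 < m then i.+1 else 0).
  move=> i im; rewrite next_nth.
  have gi : g i \in c by rewrite -(ncg i im) mem_nth ?sc.
  rewrite gi.
  have idx : index (g i) c = i by rewrite -(ncg i im) index_uniq ?sc.
  rewrite idx.
  have [y [p Ec]] : exists y p, c = y :: p.
    by case: (c) sc => [|y p] /=; [lia|exists y, p].
  have y0 : y = g 0 by rewrite -ncg; [rewrite Ec|lia].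
  rewrite Ec /=; case: ifP => ii.
  - have := ncg i.+1 ii; rewrite Ec /= -y0 => ->; by [].
  - rewrite nth_default //; have := sc; rewrite Ec /=; lia.
have := ch c uc cc; rewrite sc => /(_ m3) /existsP[x /existsP[y /and5P[xc yc exy ynx ypx]]].
have [i im Ei] := memc x xc; have [j jm Ej] := memc y yc; subst x y.
rewrite nextg // in ynx.
have Hpn : forall a b, a < m -> b < m -> next c (g a) = g b -> prev c (g b) = g a.
  by move=> a b _ _ <-; rewrite prev_next.
case: (gonly i j im jm exy) => [Hj|[Hi|[[Hi Hj]|[Hj Hi]]]].
- by move: ynx; rewrite -Hj jm eqxx.
- move: ypx; rewrite (Hpn j i) ?eqxx // nextg // -Hi im //.
- move: ypx; rewrite (Hpn j i) ?eqxx // nextg // Hi Hj prednK //; [rewrite ltnn //|lia].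
- by move: ynx; rewrite Hj Hi prednK ?ltnn ?eqxx //; lia.
Qed.
End Chord.

Definition dmin (P : pred nat) : nat :=
  match excluded_middle_informative (exists n, P n) with
  | left H => ex_minn H | right _ => 0 end.

Lemma dminP (P : pred nat) n : P n -> P (dmin P) /\ forall m, P m -> dmin P <= m.
Proof.
move=> Pn; rewrite /dmin; case: excluded_middle_informative => [H|[]]; last by exists n.
by case: ex_minnP.
Qed.

Section Dist.
Variables (T : finType) (r : rel T).

Definition reach x v n := [exists p : n.-tuple T, path r x p && (last x p == v)].

Lemma reachP x v n :
  reflect (exists p, [/\ size p = n, path r x p & last x p = v]) (reach x v n).
Proof.
apply: (iffP existsP) => [[p /andP[pp /eqP lp]]|[p [sp pp lp]]].
  by exists p; rewrite size_tuple.
have sp' : size p == n by rewrite sp.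
by exists (Tuple sp') => /=; rewrite pp lp eqxx.
Qed.

Definition dist x v := dmin (reach x v).

Lemma dist_min x p : path r x p -> dist x (last x p) <= size p.
Proof.
move=> pp; have R : reach x (last x p) (size p) by apply/reachP; exists p.
by have [_ ->] := dminP R.
Qed.

Lemma dist_reach x v : connect r x v ->
  exists p, [/\ size p = dist x v, path r x p & last x p = v].
Proof.
case/connectP=> p pp lp.
have R : reach x v (size p) by apply/reachP; exists p.
by have [/reachP H _] := dminP R.
Qed.

Lemma dist_edge x v w : connect r x v -> r v w -> dist x w <= (dist x v).+1.
Proof.
move=> cv rvw; have [p [sp pp lp]] := dist_reach cv.
have := @dist_min x (rcons p w); rewrite last_rcons size_rcons sp; apply.
by rewrite rcons_path pp lp.
Qed.

Lemma dist0 x v : connect r x v -> dist x v = 0 -> v = x.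
Proof.
move=> cv d0; have [p [sp pp lp]] := dist_reach cv.
by move: sp lp; rewrite d0; case: p {pp}.
Qed.

Lemma dist_pred x v : connect r x v -> 0 < dist x v ->
  exists u, [/\ r u v, connect r x u & (dist x u).+1 = dist x v].
Proof.
move=> cv dp; have [p [sp pp lp]] := dist_reach cv.
case/lastP: p sp pp lp => [|p w] sp pp lp; first by move: sp dp => /= <-.
rewrite last_rcons in lp; subst w.
move: pp; rewrite rcons_path => /andP[pp ru].
exists (last x p); split => //; first by apply/connectP; exists p.
apply/eqP; rewrite eqn_leq -{1}sp size_rcons ltnS dist_min //= dist_edge //.
by apply/connectP; exists p.
Qed.
End Dist.

Definition eW (T : finType) (e : rel T) (W : {set T}) : rel T :=
  fun u v => [&& u \in W, v \in W & e u v].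

Ltac clin := repeat match goal with
 | H : is_true (_ \in _) |- _ => clear H
 | H : is_true (~~ (_ \in _)) |- _ => clear H
 end.
Ltac slia := clin; lia.
Section Key.
Variables (T : finType) (e : rel T).
Hypothesis sg : simple_graph e.
Hypothesis ch : chordal e.

Lemma key (C S : {set T}) x0 :
  x0 \in C ->
  (forall c1 c2, c1 \in C -> c2 \in C -> connect (eW e C) c1 c2) ->
  (forall s1 s2, s1 \in S -> s2 \in S -> s1 != s2 -> e s1 s2) ->
  (forall s, s \in S -> s \notin C) ->
  (forall s, s \in S -> exists2 c, c \in C & e s c) ->
  exists2 x, x \in C & forall s, s \in S -> e x s.
Proof.
case: sg => sym irr.
move=> x0C conC cliS SnC Snb.
pose NS z := S :&: [set w | e z w].
have NSin : forall z w, (w \in NS z) = (w \in S) && e z w by move=> z w; rewrite !inE.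
clearbody NS.
pose x := [arg max_(z > x0 in C) #|NS z|].
have [xC xmax] : x \in C /\ forall z, z \in C -> #|NS z| <= #|NS x|.
  by rewrite /x; case: arg_maxnP.
clearbody x.
exists x => // s sS; apply/negPn/negP => nxs.
set r := eW e C in conC *.
have rC : forall u v, r u v -> u \in C /\ v \in C /\ e u v.
  by move=> u v /and3P[].
have [c cC esc] := Snb s sS.
pose Y := [set z in C | e z s].
have Yin : forall z, (z \in Y) = (z \in C) && e z s by move=> z; rewrite !inE.
clearbody Y.
have cY : c \in Y by rewrite Yin cC sym.
pose y := [arg min_(z < c in Y) dist r x z].
have [yY ymin] : y \in Y /\ forall z, z \in Y -> dist r x y <= dist r x z.
  by rewrite /y; case: arg_minnP.
clearbody y.
have [yC eys] : y \in C /\ e y s by move: yY; rewrite Yin => /andP[].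
set D := dist r x y.
pose pr v := odflt v [pick u | r u v && connect r x u && ((dist r x u).+1 == dist r x v)].
have prP : forall v, v \in C -> 0 < dist r x v ->
    [/\ r (pr v) v, pr v \in C & (dist r x (pr v)).+1 = dist r x v].
  move=> v vC dp; have [u [ruv cu du]] := dist_pred (conC x v xC vC) dp.
  rewrite /pr; case: pickP => [u' /andP[/andP[ru' _] /eqP du']|/(_ u)].
    by split => //; have [] := rC _ _ ru'.
  by rewrite ruv cu du eqxx.
have Ddef : dist r x y = D by [].
clearbody pr D.
have hP : forall k, k <= D -> iter k pr y \in C /\ dist r x (iter k pr y) = D - k.
  elim=> [|k IH] kD; first by rewrite subn0 Ddef yC.
  have [hC hd] := IH (ltnW kD).
  have [_ pC pd] := prP _ hC (ltac:(rewrite hd; slia)).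
  by rewrite /=; split => //; move: pd; rewrite hd; slia.
pose h i := iter (D - i) pr y.
have hC : forall i, i <= D -> h i \in C.
  by move=> i iD; have [] := hP (D - i) (leq_subr _ _).
have hd : forall i, i <= D -> dist r x (h i) = i.
  by move=> i iD; have [_ ->] := hP (D - i) (leq_subr _ _); slia.
have hcon : forall i, i <= D -> connect r x (h i) by move=> i iD; apply: conC => //; apply: hC.
have hedge : forall i, i < D -> e (h i) (h i.+1).
  move=> i iD; have -> : h i = pr (h i.+1).
    by rewrite /h (_ : D - i = (D - i.+1).+1) //; slia.
  have [rp _ _] := prP _ (hC _ iD) (ltac:(rewrite hd //; slia)).
  by have [_ []] := rC _ _ rp.
have hy : h D = y by rewrite /h subnn.
clearbody h.
have hx : h 0 = x by apply: dist0 (hcon 0 (leq0n _)) (hd 0 (leq0n _)).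
have hns : forall i, i < D -> ~~ e (h i) s.
  move=> i iD; apply/negP => ehs.
  have : h i \in Y by rewrite Yin hC ?ehs //; slia.
  by move/ymin; rewrite -/D hd; slia.
have hind : forall i j, i <= D -> j <= D -> e (h i) (h j) -> j <= i.+1.
  move=> i j iD jD eij; rewrite -(hd i iD) -(hd j jD); apply: dist_edge (hcon i iD) _.
  by rewrite /r /eW hC ?hC ?eij.
have hinj : forall i j, i <= D -> j <= D -> h i = h j -> i = j.
  by move=> i j iD jD hij; rewrite -(hd i iD) -(hd j jD) hij.
have tSy : forall t, t \in S -> e x t -> e y t.
  move=> t tS ext.
  have tns : t != s by apply: contraNneq nxs => <-.
  have tC : t \notin C := SnC t tS.
  have sC : s \notin C := SnC s sS.
  pose P k := (k <= D) && e t (h k).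
  have P0 : exists k, P k by exists 0; rewrite /P leq0n hx sym.
  have Pb : forall k, P k -> k <= D by move=> k /andP[].
  case: (ex_maxnP P0 Pb) => j /andP[jD etj] jmax.
  have [jeq|jlt] := eqVneq j D.
    by rewrite sym -hy -jeq.
  have jlD : j < D by rewrite ltn_neqAle jlt jD.
  exfalso.
  pose m := D - j + 3.
  pose g k := if k == 0 then t else if k <= D - j + 1 then h (j + k - 1) else s.
  have gcase : forall k, k < m ->
     [\/ k = 0 /\ g k = t, [/\ 1 <= k, k <= D - j + 1 & g k = h (j + k - 1)] |
         k = D - j + 2 /\ g k = s].
    move=> k km; rewrite /g; case: eqP => [->|k0]; first by constructor 1.
    case: ifP => kle; first by constructor 2; split => //; slia.
    constructor 3; split => //; move/negbT: kle; rewrite /m in km; slia.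
  have hneq : forall i, i <= D -> (h i != t) && (h i != s).
    move=> i iD; have hiC := hC i iD; apply/andP; split; apply/eqP => E;
      [move: tC|move: sC]; by rewrite -E hiC.
  apply: (@no_chordless T e g m ch).
  - rewrite /m; slia.
  - move=> a b; rewrite !inE => am bm gab.
    have [[a0 ga]|[a1 a2 ga]|[a3 ga]] := gcase a am;
    have [[b0 gb]|[b1 b2 gb]|[b3 gb]] := gcase b bm; rewrite ?ga ?gb in gab; try slia.
    + by move: (hneq (j + b - 1) (ltac:(slia))); rewrite gab eqxx.
    + by move: tns; rewrite gab eqxx.
    + by move: (hneq (j + a - 1) (ltac:(slia))); rewrite gab eqxx.
    + by have := hinj (j + a - 1) (j + b - 1) (ltac:(slia)) (ltac:(slia)) gab; slia.
    + by move: (hneq (j + a - 1) (ltac:(slia))); rewrite gab eqxx andbF.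
    + by move: tns; rewrite gab eqxx.
    + by move: (hneq (j + b - 1) (ltac:(slia))); rewrite gab eqxx andbF.
  - move=> k km.
    have [[k0 gk]|[k1 k2 gk]|[k3 gk]] := gcase k (ltnW km);
    have [[b0 gb]|[b1 b2 gb]|[b3 gb]] := gcase k.+1 km; rewrite ?gk ?gb; try slia.
    + by rewrite k0 addn1 subn1.
    + by rewrite (_ : j + k.+1 - 1 = (j + k - 1).+1); [apply: hedge|]; slia.
    + by rewrite (_ : j + k - 1 = D) ?hy //; slia.
  - have Em : m.-1 = D - j + 2 by rewrite /m; slia.
    have [[H1 _]|[H1 H2 _]|[_ ->]] := gcase m.-1 (ltac:(rewrite /m; slia));
      [rewrite Em in H1; slia|rewrite Em in H2; slia|].
    have [[_ ->]|[H3 H4 _]|[H3 _]] := gcase 0 (ltac:(rewrite /m; slia)); try slia.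
    by apply: (cliS s t sS tS); rewrite eq_sym.
  - move=> a b am bm eab.
    have [[a0 ga]|[a1 a2 ga]|[a3 ga]] := gcase a am;
    have [[b0 gb]|[b1 b2 gb]|[b3 gb]] := gcase b bm; rewrite ?ga ?gb in eab.
    + by rewrite irr in eab.
    + have := jmax (j + b - 1); rewrite /P eab andbT => /(_ (ltac:(slia))); slia.
    + right; right; left; rewrite /m; slia.
    + rewrite sym in eab; have := jmax (j + a - 1); rewrite /P eab andbT => /(_ (ltac:(slia))); slia.
    + have := hind (j + a - 1) (j + b - 1) (ltac:(slia)) (ltac:(slia)) eab.
      rewrite sym in eab; have := hind (j + b - 1) (j + a - 1) (ltac:(slia)) (ltac:(slia)) eab.
      have : a != b by apply: contraTneq eab => ->; rewrite irr.
      slia.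
    + have : ~~ (j + a - 1 < D) by apply: contraL eab => /hns.
      slia.
    + right; right; right; rewrite /m; slia.
    + rewrite sym in eab; have : ~~ (j + b - 1 < D) by apply: contraL eab => /hns.
      slia.
    + by rewrite irr in eab.
have sub : NS x \proper NS y.
  apply/properP; split.
    by apply/subsetP => t; rewrite !NSin => /andP[tS0 ext]; rewrite tS0 (tSy t tS0 ext).
  by exists s; rewrite !NSin ?sS ?eys // (negbTE nxs).
by have := xmax y yC; rewrite leqNgt proper_card.
Qed.
End Key.

Section Bal.
Variables (T : finType) (e : rel T).
Hypothesis sg : simple_graph e.
Hypothesis ch : chordal e.
Variable U : {set T}.

Definition clique (K : {set T}) := [forall x in K, forall y in K, (x != y) ==> e x y].
Definition ccomp (K : {set T}) a := [set b in U :\: K | connect (eW e (U :\: K)) a b].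
Definition fK (K : {set T}) := \max_(a in U :\: K) #|ccomp K a|.

Lemma cliqueP (K : {set T}) : reflect (forall x y, x \in K -> y \in K -> x != y -> e x y) (clique K).
Proof.
apply: (iffP forallP) => [H x y xK yK nxy|H x].
  by move: (H x); rewrite xK /= => /forallP/(_ y); rewrite yK nxy.
by apply/implyP => xK; apply/forall_inP => y yK; apply/implyP; apply: H.
Qed.

Lemma connect_inv (r : rel T) (Q : pred T) a b :
  Q a -> (forall u v, Q u -> r u v -> Q v) -> connect r a b -> Q b.
Proof.
move=> Qa st /connectP[p pp ->]; elim: p a Qa pp => //= v p IH a Qa /andP[rav pp].
exact: IH (st _ _ Qa rav) pp.
Qed.

Lemma path_restrict (W D : {set T}) a p : a \in D ->
  (forall u v, u \in D -> eW e W u v -> v \in D) ->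
  path (eW e W) a p -> path (eW e D) a p.
Proof.
move=> aD cl; elim: p a aD => //= v p IH a aD /andP[rav pp].
have vD := cl _ _ aD rav; move: rav => /and3P[_ _ eav].
by rewrite /eW aD vD eav /= IH.
Qed.

Lemma eW_sym W : symmetric (eW e W).
Proof. by case: sg => sym _ u v; rewrite /eW sym andbCA. Qed.

Lemma balanced : U != set0 ->
  exists K : {set T}, [/\ K \subset U, K != set0, clique K &
    forall a, a \in U :\: K -> 2 * #|ccomp K a| <= #|U|].
Proof.
case: sg => sym irr.
case/set0Pn=> u uU.
pose P (K : {set T}) := [&& K \subset U, K != set0 & clique K].
have P0 : P [set u].
  rewrite /P sub1set uU /=; apply/andP; split; first by apply/set0Pn; exists u; rewrite inE.
  by apply/cliqueP => x y; rewrite !inE => /eqP-> /eqP->; rewrite eqxx.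
pose K := [arg min_(K < [set u] | P K) fK K].
have [PK Kmin] : P K /\ forall K', P K' -> fK K <= fK K'.
  by rewrite /K; case: arg_minnP.
clearbody K.
case/and3P: PK => KU Kn0 cK; exists K; split => // a aUK.
rewrite leqNgt; apply/negP => big.
have CfK : #|ccomp K a| <= fK K by apply: (leq_bigmax_cond (F := fun a => #|ccomp K a|)).
set Cc := ccomp K a in big CfK *.
have Cin : forall b, (b \in Cc) = (b \in U :\: K) && connect (eW e (U :\: K)) a b.
  by move=> b; rewrite inE.
clearbody Cc.
have aC : a \in Cc by rewrite Cin aUK connect0.
have CUK : forall c, c \in Cc -> c \in U :\: K by move=> c; rewrite Cin => /andP[].
have Cclos : forall c w, c \in Cc -> w \in U :\: K -> e c w -> w \in Cc.
  move=> c w cC wUK ecw; rewrite Cin wUK /=.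
  move: cC; rewrite Cin => /andP[cUK cac]; apply: connect_trans cac (connect1 _).
  by rewrite /eW cUK wUK ecw.
have Cconn : forall c1 c2, c1 \in Cc -> c2 \in Cc -> connect (eW e Cc) c1 c2.
  have ac : forall c, c \in Cc -> connect (eW e Cc) a c.
    move=> c; rewrite Cin => /andP[_ /connectP[p pp ->]].
    apply/connectP; exists p => //; apply: path_restrict pp => // x y xC /and3P[_ yUK exy].
    exact: Cclos xC yUK exy.
  move=> c1 c2 c1C c2C; apply: connect_trans (ac _ c2C).
  by rewrite (sym_connect_sym (eW_sym Cc)) ac.
pose S := [set s in K | [exists c in Cc, e s c]].
have Sin : forall s, (s \in S) = (s \in K) && [exists c in Cc, e s c] by move=> s; rewrite inE.
clearbody S.
have [x xC xS] : exists2 x, x \in Cc & forall s, s \in S -> e x s.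
  apply: (@key T e sg ch Cc S a aC Cconn).
  - move=> s1 s2; rewrite !Sin => /andP[s1K _] /andP[s2K _].
    exact: (cliqueP _ cK).
  - move=> s; rewrite Sin => /andP[sK _]; apply/negP => /CUK.
    by rewrite inE sK.
  - by move=> s; rewrite Sin => /andP[_ /exists_inP[c cC esc]]; exists c.
pose K' := x |: S.
have SK : forall s, s \in S -> s \in K by move=> s; rewrite Sin => /andP[].
have xUK : x \in U :\: K := CUK x xC.
have PK' : P K'.
  apply/and3P; split.
  - apply/subsetP => w /setU1P[->|/SK wK].
      by move: xUK; rewrite inE => /andP[].
    exact: (subsetP KU).
  - by apply/set0Pn; exists x; rewrite !inE eqxx.
  - apply/cliqueP => y z /setU1P[->|yS] /setU1P[->|zS] nyz.
    + by rewrite eqxx in nyz.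
    + exact: xS.
    + by rewrite sym; apply: xS.
    + exact: (cliqueP _ cK) (SK _ yS) (SK _ zS) nyz.
have fK'lt : fK K' < #|Cc|.
  have Cpos : 0 < #|Cc| by apply/card_gt0P; exists a.
  rewrite -(prednK Cpos) ltnS; apply/bigmax_leqP => b bUK'.
  rewrite -ltnS (prednK Cpos).
  have bU : b \in U by move: bUK'; rewrite inE => /andP[].
  have bK' : b \notin K' by move: bUK'; rewrite inE => /andP[].
  have adjS : forall v c, v \in K -> c \in Cc -> e v c -> v \in K'.
    by move=> v c vK cC evc; rewrite !inE Sin vK; apply/orP; right; apply/exists_inP; exists c.
  case bC: (b \in Cc).
  - have sub : ccomp K' b \subset Cc :\ x.
      apply/subsetP => w; rewrite inE => /andP[wUK' cbw].
      rewrite !inE; apply/andP; split.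
        by apply: contraTneq wUK' => ->; rewrite !inE eqxx.
      apply: (connect_inv (Q := fun v => v \in Cc)) cbw; first by rewrite bC.
      move=> u0 v uC /and3P[_ vUK' euv].
      have vU : v \in U by move: vUK'; rewrite inE => /andP[].
      have vK' : v \notin K' by move: vUK'; rewrite inE => /andP[].
      apply: (Cclos _ _ uC _ euv); rewrite inE vU andbT.
      by apply: contra vK' => vK; apply: adjS vK uC _; rewrite sym.
    apply: leq_ltn_trans (subset_leq_card sub) _.
    by rewrite (cardsD1 x Cc) xC.
  - have sub : ccomp K' b \subset U :\: Cc.
      apply/subsetP => w; rewrite inE => /andP[wUK' cbw].
      have wU : w \in U by move: wUK'; rewrite inE => /andP[].
      rewrite inE wU andbT.
      apply: (connect_inv (Q := fun v => v \notin Cc)) cbw; first by rewrite bC.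
      move=> u0 v uC /and3P[uUK' _ euv]; apply/negP => vC.
      have u0U : u0 \in U by move: uUK'; rewrite inE => /andP[].
      have uK' : u0 \notin K' by move: uUK'; rewrite inE => /andP[].
      have uK : u0 \notin K by apply: contra uK' => uK; apply: (adjS _ _ uK vC euv).
      by move: uC; rewrite (Cclos v u0 vC) // ?inE ?u0U ?uK // sym.
    apply: leq_ltn_trans (subset_leq_card sub) _.
    have CU : Cc \subset U by apply/subsetP => c /CUK; rewrite inE => /andP[].
    rewrite cardsDS //; slia.
have := Kmin K' PK'.
slia.
Qed.
End Bal.

Lemma card_bigcup_le (I T' : finType) (P : pred I) (F : I -> {set T'}) :
  #|\bigcup_(i | P i) F i| <= \sum_(i | P i) #|F i|.
Proof.
elim/big_rec2: _ => [|i n A _ le]; first by rewrite cards0.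
by apply: leq_trans (leq_card_setU _ _).1 _; rewrite leq_add2l.
Qed.

Lemma pboolT (P : Prop) : P -> pbool P.
Proof. by rewrite /pbool; case: excluded_middle_informative. Qed.

Lemma path_in (T : finType) (e : rel T) (W : {set T}) a p :
  {subset a :: p <= W} -> path e a p -> path (eW e W) a p.
Proof.
elim: p a => //= v p IH a sub /andP[eav pp].
rewrite /eW sub ?inE ?eqxx // sub ?inE ?eqxx ?orbT //= eav IH //.
by move=> w wp; apply: sub; rewrite inE wp orbT.
Qed.

Unset Implicit Arguments.
Theorem lemma14 (T : finType) (e : rel T) (U : {set T}) :
  simple_graph e -> connected_graph e -> chordal e ->
  U != set0 -> self_contained e U ->
  exists2 v, v \in U &
    (1 / (2 * (maxdeg e + 1))%:R <= frac_through e U v)%R.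
Proof.
move=> sg conn ch Un0 sc.
have [sym irr] := sg.
have [K [KU Kn0 cK Kbal]] := balanced sg ch Un0.
case/set0Pn: Kn0 => k0 k0K.
pose pt v := pairs_through e U v.
pose kk := [arg max_(k > k0 in K) #|pt k|].
have [kkK kkmax] : kk \in K /\ forall k, k \in K -> #|pt k| <= #|pt kk|.
  by rewrite /kk; case: arg_maxnP.
clearbody kk.
set M := #|pt kk| in kkmax *.
have cardK : #|K| <= maxdeg e + 1.
  have sub : K \subset k0 |: [set w | e k0 w].
    apply/subsetP => w wK; rewrite !inE; case: eqVneq => //= nw.
    by apply: (cliqueP _ _ cK) => //; rewrite eq_sym.
  apply: leq_trans (subset_leq_card sub) _.
  rewrite cardsU1 addnC; apply: leq_add; last exact: leq_b1.
  exact: (leq_bigmax (F := degree e) k0).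
have Bad_sub : setX U U \subset
    (\bigcup_(a in U :\: K) [set (a, b) | b in ccomp e U K a]) :|: \bigcup_(k in K) pt k.
  apply/subsetP => [[a b]]; rewrite inE /= => /andP[aU bU].
  have [p [sp pp lp]] := dist_reach (conn a b).
  have shp : shortest_path e a b p.
    split; first by rewrite /walk pp lp eqxx.
    by move=> q /andP[qp /eqP lq]; rewrite sp -lq dist_min.
  have pU : {subset a :: p <= U} by apply: sc shp.
  case: (boolP (has (fun v => v \in K) (a :: p))) => [/hasP[k kp kK]|/hasPn nK].
    rewrite inE; apply/orP; right; apply/bigcupP; exists k => //.
    rewrite /pt /pairs_through inE /= aU bU /=; apply: pboolT.
    by exists p.
  rewrite inE; apply/orP; left; apply/bigcupP; exists a.
    by rewrite inE aU andbT; apply: nK; rewrite inE eqxx.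
  apply/imsetP; exists b => //.
  have bin : b \in a :: p by rewrite -lp mem_last.
  rewrite inE [b \in _ :\: _]inE bU (nK b bin) /=.
  apply/connectP; exists p => //; apply: path_in pp.
  by move=> w wp; rewrite inE pU ?nK.
have h1 : #|U| * #|U| <= \sum_(a in U :\: K) #|ccomp e U K a| + #|K| * M.
  rewrite -cardsX; apply: leq_trans (subset_leq_card Bad_sub) _.
  apply: leq_trans (leq_card_setU _ _).1 _; apply: leq_add.
    apply: leq_trans (card_bigcup_le _ _) _; apply: leq_sum => a _.
    exact: leq_imset_card.
  apply: leq_trans (card_bigcup_le _ _) _; rewrite -sum_nat_const.
  by apply: leq_sum => k kK; apply: kkmax.
have h2 : 2 * \sum_(a in U :\: K) #|ccomp e U K a| <= #|U| * #|U|.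
  rewrite big_distrr /=.
  apply: (@leq_trans (\sum_(i in U :\: K) #|U|)); first by apply: leq_sum.
  by rewrite sum_nat_const leq_mul2r subset_leq_card ?orbT // subsetDl.
have KM : #|K| * M <= (maxdeg e + 1) * M := leq_mul cardK (leqnn M).
have fin : #|U| ^ 2 <= 2 * (maxdeg e + 1) * M.
  rewrite -mulnA; move: h1 h2 KM; set S := \sum_(a in _) _; rewrite expnS expn1; lia.
have nU : 0 < #|U| by rewrite card_gt0.
exists kk; first exact: (subsetP KU).
rewrite /frac_through (_ : #|pairs_through e U kk| = M) //.
rewrite ler_pdivlMr ?ltr0n ?expn_gt0 ?nU // mul1r mulrC ler_pdivrMr ?ltr0n ?muln_gt0 ?addn1 //.
rewrite -natrM ler_nat; apply: leq_trans fin _; by rewrite mulnC addn1.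
Qed.
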